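(* Let $f:\mathbf{M}\to\mathbf{M}$ be a measurable map preserving a probability measure $\mu$, and let $(U_n)_{n\ge1}$ be a nested sequence of measurable sets ($U_{n+1}\subset U_n$) with $\mu(U_n)>0$ for all $n$ and $\mu(U_n)\to0$. Assume that $\pi_{\operatorname{ess}}(U_n)\to\infty$ as $n\to\infty$. Then for every $\ell\ge2$ the limit $$\hat\alpha_\ell=\lim_{K\to\infty}\lim_{n\to\infty}\mu_{U_n}\big(\tau^{\ell-1}_{U_n}\le K\big)$$ exists and equals $0$.
   Context: For a measurable set $U$, the first entry time is $\tau_U(x)=\min\{j\ge1: f^j(x)\in U\}$; higher entry times are defined recursively by $\tau_U^1=\tau_U$, $\tau^j_U(x)=\tau^{j-1}_U(x)+\tau_U(f^{\tau^{j-1}_U(x)}(x))$, with the convention $\tau^0_U=0$. $\mu_U$ denotes the conditional measure $\mu_U(A)=\mu(A\cap U)/\mu(U)$. The essential period of a set $U$ of positive measure is $\pi_{\operatorname{ess}}(U)=\min\{k>0:\mu(f^{-k}U\cap U)>0\}$. *)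

(* Defs.v *)
From HB Require Import structures.
From mathcomp Require Import all_boot all_order all_algebra.
From mathcomp Require Import all_classical all_reals all_analysis.
Set Implicit Arguments. Unset Strict Implicit. Unset Printing Implicit Defensive.
Import Order.TTheory GRing.Theory Num.Theory.
Local Open Scope classical_set_scope.
Local Open Scope ring_scope.

(* First entry time tau_U(x) = min {j >= 1 : f^j x \in U}; None encodes +oo
   (no entry). *)
Definition first_entry (T : Type) (f : T -> T) (U : set T) (x : T) : option nat :=
  match pselect (exists j, ((0 < j)%N && `[< U (iter j f x) >])) with
  | left H => Some (ex_minn H)
  | right _ => None
  end.

Fixpoint entry_time (T : Type) (f : T -> T) (U : set T) (j : nat) (x : T)
  : option nat :=
  match j with
  | 0 => Some 0%N
  | j'.+1 => match entry_time f U j' x with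
             | Some t => omap (addn t) (first_entry f U (iter t f x))
             | None => None
             end
  end.

Definition entry_le (T : Type) (f : T -> T) (U : set T) (j K : nat) : set T :=
  [set x | match entry_time f U j x with Some t => (t <= K)%N | None => False end].

Definition cond_meas (d : measure_display) (T : measurableType d) (R : realType)
  (mu : probability T R) (U A : set T) : R :=
  fine (mu (A `&` U)) / fine (mu U).

(* Essential period: min {k > 0 : mu(f^{-k} U `&` U) > 0}; None encodes +oo. *)
Definition ess_period (d : measure_display) (T : measurableType d) (R : realType)
  (mu : probability T R) (f : T -> T) (U : set T) : option nat :=
  match pselect (exists k, ((0 < k)%N &&
          `[< (0 < mu ((iter k f) @^-1` U `&` U))%E >])) with
  | left H => Some (ex_minn H)
  | right _ => None
  end.

(* Main.v *)
Require Import Defs.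
From HB Require Import structures.
From mathcomp Require Import all_boot all_order all_algebra.
From mathcomp Require Import all_classical all_reals all_analysis.
Import Order.TTheory GRing.Theory Num.Theory numFieldNormedType.Exports.
Local Open Scope classical_set_scope.
Local Open Scope ring_scope.

Section Aux.
Context (d : measure_display) (M : measurableType d) (f : M -> M)
  (f_meas : measurable_fun setT f).

Lemma iter_meas k : measurable_fun setT (iter k f).
Proof.
elim: k => [|k IH]; first exact: measurable_id.
rewrite (_ : iter k.+1 f = f \o iter k f) //.
exact: measurableT_comp.
Qed.

Lemma preim_meas k (B : set M) : measurable B -> measurable ((iter k f) @^-1` B).
Proof. move=> mB; rewrite -[X in measurable X]setTI; exact: iter_meas. Qed.

Lemma first_entryP (U : set M) x s :
  first_entry f U x = Some s <->
  [/\ (0 < s)%N, U (iter s f x) & forall i, (0 < i < s)%N -> ~ U (iter i f x)].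
Proof.
rewrite /first_entry; case: pselect => [H|H].
- case: ex_minnP => m /andP[m0 /asboolP Um] mmin; split.
  + move=> [<-]; split => // i /andP[i0 ilt] Ui.
    have := mmin i; rewrite i0 /=. have -> : `[< U (iter i f x) >] by exact/asboolP.
    move=> /(_ isT); rewrite leqNgt ilt //.
  + move=> [s0 Us smin]; congr Some; apply/eqP; rewrite eqn_leq.
    have -> : (m <= s)%N by apply: mmin; rewrite s0 /=; exact/asboolP.
    rewrite /= leqNgt; apply/negP => sm; apply: (smin m) (Um); by rewrite m0 sm.
- split => // -[s0 Us _]; exfalso; apply: H; exists s; rewrite s0 /=; exact/asboolP.
Qed.

Lemma first_entry_meas (U : set M) s : measurable U ->
  measurable [set x | first_entry f U x = Some s].
Proof.
move=> mU.
have -> : [set x | first_entry f U x = Some s] =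
  (if (0 < s)%N then (iter s f) @^-1` U `&`
     \bigcap_i (if (0 < i < s)%N then (iter i f) @^-1` (~` U) else setT)
   else set0).
  apply/seteqP; split => x /=.
  - move/first_entryP => [s0 Us smin]; rewrite s0; split => // i _ /=.
    by case: ifP => // /smin.
  - case: ifP => // s0 [Us H]; apply/first_entryP; split => // i iP.
    by have := H i I; rewrite iP.
case: ifP => _; last exact: measurable0.
apply: measurableI; first exact: preim_meas.
apply: bigcapT_measurable => i; case: ifP => _; last exact: measurableT.
apply: preim_meas; exact: measurableC.
Qed.

Lemma entry_time_meas (U : set M) j t : measurable U ->
  measurable [set x | entry_time f U j x = Some t].
Proof.
move=> mU; elim: j t => [|j IH] t /=.
  case: t => [|t].
    have -> : [set x : M | Some 0%N = Some 0%N] = setT by apply/seteqP; split.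
    exact: measurableT.
  have -> : [set x : M | Some 0%N = Some t.+1] = set0 by apply/seteqP; split.
  exact: measurable0.
have -> : [set x | match entry_time f U j x with
             | Some t0 => omap (addn t0) (first_entry f U (iter t0 f x))
             | None => None end = Some t] =
  \bigcup_t0 (if (t0 <= t)%N then [set x | entry_time f U j x = Some t0] `&`
      (iter t0 f) @^-1` [set y | first_entry f U y = Some (t - t0)%N] else set0).
  apply/seteqP; split => x /=.
  - case E: (entry_time f U j x) => [t0|] //.
    case F: (first_entry f U (iter t0 f x)) => [s|] //= [<-].
    exists t0 => //; rewrite leq_addr; split => //; by rewrite addKn.
  - move=> [t0 _]; case: ifP => // t0t [-> /= ->] /=; by rewrite subnKC.
apply: bigcupT_measurable => t0; case: ifP => _; last exact: measurable0.
apply: measurableI; first exact: IH.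
apply: preim_meas; exact: first_entry_meas.
Qed.

Lemma entry_le_meas (U : set M) j K : measurable U ->
  measurable (entry_le f U j K).
Proof.
move=> mU.
have -> : entry_le f U j K =
  \bigcup_t (if (t <= K)%N then [set x | entry_time f U j x = Some t] else set0).
  apply/seteqP; split => x; rewrite /entry_le /=.
  - case E: (entry_time f U j x) => [t|] // tK; exists t => //; by rewrite tK.
  - move=> [t _]; case: ifP => // tK ->; done.
apply: bigcupT_measurable => t; case: ifP => _; last exact: measurable0.
exact: entry_time_meas.
Qed.

Lemma entry_time_pos (U : set M) j x t :
  entry_time f U j.+1 x = Some t -> (0 < t)%N /\ U (iter t f x).
Proof.
rewrite /=; case: (entry_time f U j x) => [t0|] //.
case F: (first_entry f U (iter t0 f x)) => [s|] //= [<-].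
move/first_entryP: F => [s0 Us _]; split; first by rewrite addn_gt0 s0 orbT.
by rewrite addnC iterD.
Qed.

End Aux.

Lemma ess_null {d : measure_display} {M : measurableType d} {R : realType}
  {mu : probability M R} {f : M -> M} {V : set M} {K k} :
  match ess_period mu f V with Some k => (K.+1 <= k)%N | None => true end ->
  (0 < k <= K)%N -> mu ((iter k f) @^-1` V `&` V) = 0%E.
Proof.
rewrite /ess_period; case: pselect => [H|H].
- case: ex_minnP => m _ mmin Km /andP[k0 kK].
  apply/eqP; rewrite eq_le measure_ge0 andbT leNgt; apply/negP => pos.
  have : (m <= k)%N by apply: mmin; rewrite k0 /=; exact/asboolP.
  by move=> mk; have := leq_ltn_trans mk (leq_ltn_trans kK Km); rewrite ltnn.
- move=> _ /andP[k0 _]; apply/eqP; rewrite eq_le measure_ge0 andbT leNgt.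
  apply/negP => pos; apply: H; exists k; rewrite k0 /=; exact/asboolP.
Qed.

Theorem lemma3p1 (d : measure_display) (M : measurableType d) (R : realType)
  (mu : probability M R) (f : M -> M)
  (f_meas : measurable_fun setT f)
  (f_pres : forall A : set M, measurable A -> mu (f @^-1` A) = mu A)
  (U : nat -> set M)
  (U_meas : forall n, measurable (U n))
  (U_nest : forall n, U n.+1 `<=` U n)
  (U_pos : forall n, (0 < mu (U n))%E)
  (U_to0 : mu (U n) @[n --> \oo] --> 0%E)
  (pi_infty : forall N : nat, \forall n \near \oo,
      match ess_period mu f (U n) with Some k => (N <= k)%N | None => true end) :
  forall l : nat, (2 <= l)%N ->
  exists alpha : nat -> R,
    (forall K : nat,
       cond_meas mu (U n) (entry_le f (U n) l.-1 K) @[n --> \oo] --> alpha K) /\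
    alpha K @[K --> \oo] --> 0.
Proof.
move=> l l2; exists (fun _ => 0); split; last exact: cvg_cst.
move=> K; apply: cvg_near_cst; have := pi_infty K.+1; apply: filterS => n Hn.
rewrite /cond_meas.
have negl : mu.-negligible
   (\bigcup_k (if (0 < k <= K)%N then (iter k f) @^-1` U n `&` U n else set0)).
  apply: negligible_bigcup => k; case: ifP => kP.
    exists ((iter k f) @^-1` U n `&` U n); split => //.
      apply: measurableI => //; exact: preim_meas.
    exact: (ess_null Hn kP).
  exists set0; split => //; exact: measure0.
case: negl => B [mB B0 sB].
suff -> : mu (entry_le f (U n) l.-1 K `&` U n) = 0%E by rewrite mul0r.
apply/eqP; rewrite eq_le measure_ge0 andbT -B0.
apply: le_measure; rewrite ?inE //.
  apply: measurableI => //; exact: entry_le_meas.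
move=> x [Ex Ux]; apply: sB.
move: Ex; rewrite /entry_le /=.
have -> : l.-1 = l.-2.+1 by case: l l2 => [|[|l]].
case E: (entry_time f (U n) l.-2.+1 x) => [t|] // tK.
have [t0 Ut] := @entry_time_pos _ _ f _ _ _ _ E.
by exists t => //; rewrite t0 tK.
Qed.
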